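(* For every integer $i\ge 0$, $\lim_{k\to\infty}\overline{\alpha}(\{1,k,k+2i+1\})=\frac{i+1}{2i+3}$.
   Context: For a finite set $S$ of positive integers, the distance graph $G(S)$ has vertex set $\mathbb{Z}$, with $i,j$ adjacent iff $|i-j|\in S$. The density of $A\subseteq\mathbb{Z}$ is $\delta(A)=\limsup_{N\to\infty}\frac{|A\cap[-N,N]|}{2N+1}$, and the independence ratio $\overline{\alpha}(S)$ is the supremum of $\delta(A)$ over independent sets $A$ of $G(S)$. *)

(* Defs.v *)
From Stdlib Require Import Reals ZArith List.
From Coquelicot Require Import Coquelicot.
Open Scope R_scope.

(* Distance graph G(S): i ~ j iff |i - j| \in S.  S is a finite set of
   positive integers, given as a list. *)
Definition adjacent (S : list Z) (i j : Z) : Prop := In (Z.abs (i - j)) S.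

Definition independent (S : list Z) (A : Z -> bool) : Prop :=
  forall i j : Z, A i = true -> A j = true -> ~ adjacent S i j.

Definition count_window (A : Z -> bool) (N : nat) : nat :=
  length (filter A (map (fun m => (Z.of_nat m - Z.of_nat N)%Z) (seq 0 (2 * N + 1)))).

Definition density (A : Z -> bool) : Rbar :=
  LimSup_seq (fun N : nat => INR (count_window A N) / INR (2 * N + 1)).

Definition indep_ratio (S : list Z) : Rbar :=
  Lub_Rbar (fun r : R => exists A : Z -> bool, independent S A /\ density A = Finite r).

(* Main.v *)
Require Import Defs.
From Stdlib Require Import Reals ZArith List Lia Lra.
From Coquelicot Require Import Coquelicot.
Open Scope R_scope.

Definition b2n (b : bool) : nat := if b then 1%nat else 0%nat.

Fixpoint cnt (A : Z -> bool) (a : Z) (l : nat) : nat :=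
  match l with
  | O => O
  | S l' => (b2n (A a) + cnt A (a + 1)%Z l')%nat
  end.

Lemma cnt_window_gen A N : forall l s,
  length (filter A (map (fun m => (Z.of_nat m - Z.of_nat N)%Z) (seq s l)))
  = cnt A (Z.of_nat s - Z.of_nat N)%Z l.
Proof.
  induction l as [|l IH]; intros s; [reflexivity|].
  change (seq s (S l)) with (s :: seq (S s) l). rewrite map_cons. cbn [filter cnt].
  replace (Z.of_nat s - Z.of_nat N + 1)%Z with (Z.of_nat (S s) - Z.of_nat N)%Z by lia.
  rewrite <- IH.
  destruct (A _); simpl; reflexivity.
Qed.

Lemma cnt_window A N : count_window A N = cnt A (- Z.of_nat N)%Z (2 * N + 1).
Proof.
  unfold count_window. rewrite cnt_window_gen. f_equal.
Qed.

Lemma cnt_add A : forall l1 a l2,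
  cnt A a (l1 + l2) = (cnt A a l1 + cnt A (a + Z.of_nat l1)%Z l2)%nat.
Proof.
  induction l1 as [|l1 IH]; intros a l2; simpl.
  - rewrite Z.add_0_r; reflexivity.
  - rewrite IH.
    replace (a + 1 + Z.of_nat l1)%Z with (a + Z.pos (Pos.of_succ_nat l1))%Z by lia.
    lia.
Qed.

Lemma cnt_le_len A : forall l a, (cnt A a l <= l)%nat.
Proof.
  induction l; intros a; simpl; [lia|]. specialize (IHl (a+1)%Z).
  destruct (A a); simpl; lia.
Qed.

Lemma cnt_mono A a M b L :
  (a <= b)%Z -> (b + Z.of_nat L <= a + Z.of_nat M)%Z -> (cnt A b L <= cnt A a M)%nat.
Proof.
  intros H1 H2.
  set (d := Z.to_nat (b - a)).
  set (e := (M - d - L)%nat).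
  assert (HM : M = (d + (L + e))%nat) by (unfold e, d; lia).
  rewrite HM, cnt_add, cnt_add.
  replace (a + Z.of_nat d)%Z with b by (unfold d; lia). lia.
Qed.

Lemma cnt_snoc A a l : cnt A a (S l) = (cnt A a l + b2n (A (a + Z.of_nat l)%Z))%nat.
Proof.
  replace (S l) with (l + 1)%nat by lia. rewrite cnt_add. simpl. lia.
Qed.

Lemma cnt_ext A B : forall l a, (forall j, (j < l)%nat -> A (a + Z.of_nat j)%Z = B (a + Z.of_nat j)%Z) ->
  cnt A a l = cnt B a l.
Proof.
  induction l; intros a H; simpl; [reflexivity|].
  rewrite IHl.
  - f_equal. specialize (H 0%nat ltac:(lia)). rewrite Z.add_0_r in H. rewrite H. reflexivity.
  - intros j Hj. specialize (H (S j) ltac:(lia)).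
    replace (a + 1 + Z.of_nat j)%Z with (a + Z.of_nat (S j))%Z by lia. exact H.
Qed.

Lemma cnt_rep A T c : (forall x, (c <= cnt A x T)%nat) ->
  forall q a, (q * c <= cnt A a (q * T))%nat.
Proof.
  intros H; induction q; intros a; simpl; [lia|].
  rewrite cnt_add. specialize (H a). specialize (IHq (a + Z.of_nat T)%Z). lia.
Qed.

Lemma path_bound A : (forall y, A y = true -> A (y+1)%Z = true -> False) ->
  forall j y, (cnt A y (2*j) <= j)%nat.
Proof.
  intros H; induction j; intros y; [simpl; lia|].
  replace (2 * S j)%nat with (S (S (2*j))) by lia. simpl.
  specialize (IHj (y + 1 + 1)%Z).
  specialize (H y).
  destruct (A y), (A (y+1)%Z); simpl in *; try lia; exfalso; auto.
Qed.

Fixpoint sumx (F : Z -> nat) (a : Z) (M : nat) : nat :=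
  match M with
  | O => O
  | S M' => (F a + sumx F (a+1)%Z M')%nat
  end.

Lemma sumx_bound F B : (forall x, (F x <= B)%nat) -> forall M a, (sumx F a M <= M * B)%nat.
Proof. intros H; induction M; intros a; simpl; [lia|]. specialize (H a); specialize (IHM (a+1)%Z); lia. Qed.

Lemma sumx_plus F G : forall M a, sumx (fun x => F x + G x)%nat a M = (sumx F a M + sumx G a M)%nat.
Proof. induction M; intros a; simpl; [lia|]. rewrite IHM; lia. Qed.

Lemma sumx_ext F G : (forall x, F x = G x) -> forall M a, sumx F a M = sumx G a M.
Proof. intros H; induction M; intros a; simpl; [lia|]. rewrite IHM, H; lia. Qed.

Lemma sumx_b2n A s : forall M a, sumx (fun x => b2n (A (x + s)%Z)) a M = cnt A (a + s)%Z M.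
Proof.
  induction M; intros a; simpl; [lia|]. rewrite IHM.
  replace (a + 1 + s)%Z with (a + s + 1)%Z by lia. reflexivity.
Qed.

Lemma sumx_cnt A c a M : forall L V,
  (forall t, (t < L)%nat -> (V <= cnt A (a + c + Z.of_nat t)%Z M)%nat) ->
  (L * V <= sumx (fun x => cnt A (x + c)%Z L) a M)%nat.
Proof.
  induction L; intros V H; [simpl; lia|].
  rewrite (sumx_ext _ (fun x => cnt A (x + c)%Z L + b2n (A (x + (c + Z.of_nat L))%Z))%nat).
  2:{ intros x. rewrite cnt_snoc. rewrite Z.add_assoc. reflexivity. }
  rewrite sumx_plus, sumx_b2n.
  specialize (IHL V (fun t Ht => H t ltac:(lia))).
  specialize (H L ltac:(lia)). rewrite Z.add_assoc. lia.
Qed.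
Definition SS (k i : nat) : list Z := Z.of_nat k :: Z.of_nat (k + 2 * i + 1) :: 1%Z :: nil.

Lemma indep_edge k i A : independent (SS k i) A -> forall x d, In d (SS k i) ->
  A x = true -> A (x + d)%Z = true -> False.
Proof.
  intros H x d Hd Hx Hy. apply (H x (x+d)%Z Hx Hy). unfold adjacent.
  replace (Z.abs (x - (x + d)))%Z with d. exact Hd.
  unfold SS in Hd; simpl in Hd; destruct Hd as [<-|[<-|[<-|[]]]]; lia.
Qed.

Lemma cycle_bound k i A : independent (SS k i) A -> forall x,
  (b2n (A x) + cnt A (x + Z.of_nat k)%Z (2*i+2) <= i+1)%nat.
Proof.
  intros H x.
  assert (H1 : forall y, A y = true -> A (y+1)%Z = true -> False).
  { intros y. apply (indep_edge k i A H y 1%Z). unfold SS; simpl; auto. }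
  destruct (A x) eqn:Ex.
  - assert (Hk : A (x + Z.of_nat k)%Z = false).
    { destruct (A (x + Z.of_nat k)%Z) eqn:E; auto. exfalso.
      apply (indep_edge k i A H x (Z.of_nat k)); auto. unfold SS; simpl; auto. }
    assert (Hkm : A (x + Z.of_nat k + Z.of_nat (2*i+1))%Z = false).
    { destruct (A (x + Z.of_nat k + Z.of_nat (2*i+1))%Z) eqn:E; auto. exfalso.
      apply (indep_edge k i A H x (Z.of_nat (k + 2*i+1))); auto. unfold SS; simpl; auto.
      rewrite <- E. replace (x + Z.of_nat k + Z.of_nat (2*i+1))%Z with (x + Z.of_nat (k + 2*i+1))%Z by lia. reflexivity. }
    replace (2*i+2)%nat with (S (2*i+1)) by lia.
    rewrite cnt_snoc, Hkm.
    replace (2*i+1)%nat with (S (2*i)) by lia. cbn [cnt]. rewrite Hk.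
    pose proof (path_bound A H1 i (x + Z.of_nat k + 1)%Z). cbn [b2n]. lia.
  - pose proof (path_bound A H1 (i+1) (x + Z.of_nat k)%Z).
    replace (2*(i+1))%nat with (2*i+2)%nat in H0 by lia. cbn [b2n]. lia.
Qed.

Lemma upper_count k i A : independent (SS k i) A -> forall N,
  ((2*i+3) * cnt A (- Z.of_nat N)%Z (2*N+1) <= (i+1) * (2*N+1 + (2*i+1) + k))%nat.
Proof.
  intros H N.
  set (W := cnt A (- Z.of_nat N)%Z (2*N+1)).
  set (a := (- Z.of_nat N - Z.of_nat k - Z.of_nat (2*i+1))%Z).
  set (M := (2*N+1 + (2*i+1) + k)%nat).
  pose proof (sumx_bound _ _ (cycle_bound k i A H) M a) as Hb.
  rewrite sumx_plus in Hb.
  rewrite (sumx_ext _ (fun x => b2n (A (x + 0)%Z))) in Hb by (intros; rewrite Z.add_0_r; reflexivity).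
  rewrite sumx_b2n in Hb.
  assert (H2 : (W <= cnt A (a + 0)%Z M)%nat).
  { apply cnt_mono; unfold a, M; lia. }
  assert (H3 : ((2*i+2) * W <= sumx (fun x => cnt A (x + Z.of_nat k)%Z (2*i+2)) a M)%nat).
  { apply sumx_cnt. intros t Ht. apply cnt_mono; unfold a, M; lia. }
  fold M. nia.
Qed.
Section Constr.
Variables k i : nat.
Hypothesis Hk : (2*i+2 <= k)%nat.

Let kz := Z.of_nat k.
Let nz := (2 * Z.of_nat i + 3)%Z.
Let mz := (2 * Z.of_nat i + 1)%Z.
Definition rr := ((Z.of_nat k - 1) mod (2 * Z.of_nat i + 3))%Z.
Definition phi (x : Z) : Z := (x - rr * (x / Z.of_nat k))%Z.
Definition Eb (r : Z) : bool := Z.even r && (r <? 2 * Z.of_nat i + 2)%Z.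
Definition Ef (e : Z) : bool := Eb (e mod (2 * Z.of_nat i + 3))%Z.
Definition Acon (x : Z) : bool :=
  ((2 * Z.of_nat i + 1 <=? x mod Z.of_nat k)%Z && Ef (phi x)).

Lemma kz_pos : (0 < Z.of_nat k)%Z.
Proof. lia. Qed.

Lemma decomp x : exists q b, x = (Z.of_nat k * q + b)%Z /\ (0 <= b < Z.of_nat k)%Z.
Proof.
  exists (x / Z.of_nat k)%Z, (x mod Z.of_nat k)%Z. split.
  - apply Z.div_mod; lia.
  - apply Z.mod_pos_bound; lia.
Qed.

Lemma dm q b : (0 <= b < Z.of_nat k)%Z ->
  ((Z.of_nat k * q + b) / Z.of_nat k = q /\ (Z.of_nat k * q + b) mod Z.of_nat k = b)%Z.
Proof.
  intros Hb. split.
  - symmetry. apply (Z.div_unique _ _ _ b); auto.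
  - symmetry. apply (Z.mod_unique _ _ q); auto.
Qed.

Lemma rr_eq : exists t, (Z.of_nat k - rr = 1 + (2 * Z.of_nat i + 3) * t)%Z.
Proof.
  exists ((Z.of_nat k - 1) / (2 * Z.of_nat i + 3))%Z. unfold rr.
  pose proof (Z.div_mod (Z.of_nat k - 1) (2 * Z.of_nat i + 3)) as H.
  lia.
Qed.

Lemma E_lemma e t : Ef e = true -> Ef (e + 1 + (2 * Z.of_nat i + 3) * t)%Z = true -> False.
Proof.
  unfold Ef. rewrite (Z.mul_comm _ t), Z.mod_add by lia.
  rewrite Z.add_mod by lia. rewrite (Z.mod_small 1) by lia.
  pose proof (Z.mod_pos_bound e (2 * Z.of_nat i + 3) ltac:(lia)) as Hr.
  set (r := (e mod (2 * Z.of_nat i + 3))%Z) in *.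
  unfold Eb. intros H1 H2.
  apply andb_prop in H1. destruct H1 as [H1a H1b].
  apply Z.ltb_lt in H1b.
  rewrite Z.mod_small in H2 by lia.
  apply andb_prop in H2. destruct H2 as [H2a _].
  rewrite Z.even_add, H1a in H2a. simpl in H2a. discriminate.
Qed.

Lemma phi_dm q b : (0 <= b < Z.of_nat k)%Z -> phi (Z.of_nat k * q + b) = (Z.of_nat k * q + b - rr * q)%Z.
Proof. intros Hb. unfold phi. rewrite (proj1 (dm q b Hb)). reflexivity. Qed.

Lemma Acon_noedge x d : In d (SS k i) -> Acon x = true -> Acon (x + d)%Z = true -> False.
Proof.
  destruct (decomp x) as [q [b [-> Hb]]].
  destruct rr_eq as [t Ht].
  unfold Acon. intros Hd H1 H2.
  apply andb_prop in H1. destruct H1 as [H1a H1b].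
  apply andb_prop in H2. destruct H2 as [H2a H2b].
  apply Z.leb_le in H1a, H2a.
  rewrite (proj2 (dm q b Hb)) in H1a.
  rewrite phi_dm in H1b by exact Hb.
  unfold SS in Hd; cbn [In] in Hd; destruct Hd as [<-|[<-|[<-|[]]]].
  - replace (Z.of_nat k * q + b + Z.of_nat k)%Z with (Z.of_nat k * (q+1) + b)%Z in H2a, H2b by ring.
    rewrite phi_dm in H2b by exact Hb.
    apply (E_lemma _ t H1b). rewrite <- H2b. f_equal. nia.
  - destruct (Z_lt_ge_dec (b + (2 * Z.of_nat i + 1)) (Z.of_nat k)) as [Hc|Hc].
    + replace (Z.of_nat k * q + b + Z.of_nat (k + 2 * i + 1))%Z
        with (Z.of_nat k * (q+1) + (b + (2 * Z.of_nat i + 1)))%Z in H2a, H2b by lia.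
      rewrite phi_dm in H2b by lia.
      apply (E_lemma _ (- t - 1) H2b). rewrite <- H1b. f_equal. nia.
    + replace (Z.of_nat k * q + b + Z.of_nat (k + 2 * i + 1))%Z
        with (Z.of_nat k * (q+2) + (b + (2 * Z.of_nat i + 1) - Z.of_nat k))%Z in H2a by lia.
      rewrite (proj2 (dm (q+2) (b + (2 * Z.of_nat i + 1) - Z.of_nat k) ltac:(lia))) in H2a. lia.
  - destruct (Z_lt_ge_dec (b + 1) (Z.of_nat k)) as [Hc|Hc].
    + replace (Z.of_nat k * q + b + 1)%Z with (Z.of_nat k * q + (b + 1))%Z in H2a, H2b by lia.
      rewrite phi_dm in H2b by lia.
      apply (E_lemma _ 0 H1b). rewrite <- H2b. f_equal. lia.
    + replace (Z.of_nat k * q + b + 1)%Z with (Z.of_nat k * (q+1) + 0)%Z in H2a by lia.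
      rewrite (proj2 (dm (q+1) 0 ltac:(lia))) in H2a. lia.
Qed.

Lemma Acon_indep : independent (SS k i) Acon.
Proof.
  intros x y Hx Hy Hadj. unfold adjacent in Hadj.
  destruct (Z_le_gt_dec y x).
  - apply (Acon_noedge y (Z.abs (x - y))); auto.
    replace (y + Z.abs (x - y))%Z with x by lia. exact Hx.
  - apply (Acon_noedge x (Z.abs (x - y))); auto.
    replace (x + Z.abs (x - y))%Z with y by lia. exact Hy.
Qed.


Lemma run_eq : forall L q b, (2 * Z.of_nat i + 1 <= b)%Z -> (b + Z.of_nat L <= Z.of_nat k)%Z ->
  cnt Acon (Z.of_nat k * q + b)%Z L = cnt Ef (Z.of_nat k * q + b - rr * q)%Z L.
Proof.
  induction L; intros q b H1 H2; [reflexivity|].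
  cbn [cnt]. unfold Acon at 1.
  rewrite (proj2 (dm q b ltac:(lia))), phi_dm by lia.
  replace (2 * Z.of_nat i + 1 <=? b)%Z with true by (symmetry; apply Z.leb_le; lia).
  cbn [andb].
  replace (Z.of_nat k * q + b + 1)%Z with (Z.of_nat k * q + (b + 1))%Z by ring.
  rewrite IHL by lia.
  replace (Z.of_nat k * q + (b + 1) - rr * q)%Z with (Z.of_nat k * q + b - rr * q + 1)%Z by ring.
  reflexivity.
Qed.

Lemma Ef_shift s : Ef (s + (2 * Z.of_nat i + 3))%Z = Ef s.
Proof.
  unfold Ef. rewrite <- (Z.mul_1_l (2 * Z.of_nat i + 3)) at 1.
  rewrite Z.mod_add by lia. reflexivity.
Qed.

Definition G (e : Z) : bool := Z.even e && (e <? 2 * Z.of_nat i + 2)%Z.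

Lemma G_count : forall j s, Z.even s = true -> (s + 2 * Z.of_nat j <= 2 * Z.of_nat i + 2)%Z ->
  cnt G s (2*j) = j.
Proof.
  induction j; intros s H1 H2; [reflexivity|].
  replace (2 * S j)%nat with (S (S (2*j))) by lia. cbn [cnt].
  assert (Ga : G s = true).
  { unfold G. rewrite H1. apply Z.ltb_lt. lia. }
  assert (Gb : G (s+1)%Z = false).
  { unfold G. rewrite Z.even_add, H1. reflexivity. }
  rewrite Ga, Gb.
  rewrite IHj.
  - cbn [b2n]. lia.
  - rewrite <- Z.add_assoc, Z.even_add, H1. reflexivity.
  - lia.
Qed.

Lemma Ef_base : cnt Ef 0%Z (2*i+3) = (i+1)%nat.
Proof.
  rewrite (cnt_ext Ef G).
  - replace (2*i+3)%nat with (S (2*(i+1))) by lia. rewrite cnt_snoc.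
    rewrite G_count by (reflexivity || lia).
    unfold G. replace (0 + Z.of_nat (2 * (i + 1)) <? 2 * Z.of_nat i + 2)%Z with false
      by (symmetry; apply Z.ltb_ge; lia).
    rewrite Bool.andb_false_r. cbn [b2n]. lia.
  - intros j Hj. unfold Ef, G, Eb. rewrite Z.mod_small by lia. reflexivity.
Qed.

Lemma Ef_period : forall s, cnt Ef s (2*i+3) = (i+1)%nat.
Proof.
  assert (Hs : forall s, cnt Ef (s+1)%Z (2*i+3) = cnt Ef s (2*i+3)).
  { intros s. replace (2*i+3)%nat with (S (2*i+2)) by lia.
    rewrite cnt_snoc. cbn [cnt].
    replace (s + 1 + Z.of_nat (2*i+2))%Z with (s + (2 * Z.of_nat i + 3))%Z by lia.
    rewrite Ef_shift. lia. }
  intros s. induction s using Z.peano_ind.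
  - apply Ef_base.
  - rewrite <- Z.add_1_r, Hs. exact IHs.
  - rewrite <- (Hs (Z.pred s)), Z.add_1_r, Z.succ_pred. exact IHs.
Qed.

Lemma cntE_lower L s : ((i+1) * (L / (2*i+3)) <= cnt Ef s L)%nat.
Proof.
  pose proof (Nat.div_mod L (2*i+3) ltac:(lia)) as HL.
  rewrite HL at 2. rewrite cnt_add.
  pose proof (cnt_rep Ef (2*i+3) (i+1) (fun x => Nat.eq_le_incl _ _ (eq_sym (Ef_period x))) (L / (2*i+3)) s).
  rewrite (Nat.mul_comm (2*i+3)). lia.
Qed.

Lemma div_sum_lemma a b n : (0 < n)%nat -> ((a + b) / n <= a / n + b / n + 1)%nat.
Proof.
  intros Hn.
  assert ((a + b) / n < a / n + b / n + 2)%nat; [|lia].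
  apply Nat.Div0.div_lt_upper_bound.
  pose proof (Nat.div_mod a n ltac:(lia)). pose proof (Nat.div_mod b n ltac:(lia)).
  pose proof (Nat.mod_upper_bound a n ltac:(lia)). pose proof (Nat.mod_upper_bound b n ltac:(lia)).
  nia.
Qed.

Definition ck : nat := ((i+1) * ((k - (2*i+1)) / (2*i+3) - 1))%nat.

Lemma block_lower x : (ck <= cnt Acon x k)%nat.
Proof.
  unfold ck.
  destruct (decomp x) as [q [b [-> Hb]]].
  destruct (Z_le_gt_dec b (2 * Z.of_nat i + 1)) as [Hc|Hc].
  - eapply Nat.le_trans; [|apply (cnt_mono _ _ _ (Z.of_nat k * q + (2 * Z.of_nat i + 1))%Z (k - (2*i+1))); lia].
    rewrite run_eq by lia.
    eapply Nat.le_trans; [|apply cntE_lower]. nia.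
  - set (bn := Z.to_nat b).
    replace (cnt Acon (Z.of_nat k * q + b)%Z k) with (cnt Acon (Z.of_nat k * q + b)%Z ((k - bn) + bn)) by (f_equal; lia).
    rewrite cnt_add.
    replace (Z.of_nat k * q + b + Z.of_nat (k - bn))%Z with (Z.of_nat k * (q+1) + 0)%Z by lia.
    rewrite run_eq by lia.
    assert (H2 : (cnt Acon (Z.of_nat k * (q + 1) + (2 * Z.of_nat i + 1))%Z (bn - (2*i+1))
                 <= cnt Acon (Z.of_nat k * (q + 1) + 0)%Z bn)%nat).
    { apply cnt_mono; lia. }
    rewrite run_eq in H2 by lia.
    pose proof (cntE_lower (k - bn) (Z.of_nat k * q + b - rr * q)%Z) as H4.
    pose proof (cntE_lower (bn - (2*i+1)) (Z.of_nat k * (q + 1) + (2 * Z.of_nat i + 1) - rr * (q + 1))%Z) as H5.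
    pose proof (div_sum_lemma (k - bn) (bn - (2*i+1)) (2*i+3) ltac:(lia)) as H3.
    replace (k - bn + (bn - (2 * i + 1)))%nat with (k - (2*i+1))%nat in H3 by lia.
    nia.
Qed.

End Constr.

Lemma exN (x : R) : exists N : nat, x < INR N.
Proof.
  destruct (Rle_or_lt 0 x) as [H|H].
  - destruct (nfloor_ex x H) as [n Hn]. exists (S n). rewrite S_INR. lra.
  - exists 0%nat. simpl. lra.
Qed.

Lemma INR_2N1_pos N : 0 < INR (2 * N + 1).
Proof. apply lt_0_INR. lia. Qed.

Lemma INR_2N1_ge N : INR N <= INR (2 * N + 1).
Proof. apply le_INR. lia. Qed.

Lemma dens_le A c C : 0 <= C ->
  (forall N, INR (count_window A N) / INR (2 * N + 1) <= c + C / INR (2 * N + 1)) ->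
  forall d, 0 < d -> Rbar_le (density A) (Finite (c + d)).
Proof.
  intros HC H d Hd. unfold density.
  eapply Rbar_le_trans.
  - apply (LimSup_le _ (fun _ => c + d)).
    destruct (exN (C / d)) as [N0 HN0]. exists N0. intros n Hn.
    eapply Rle_trans; [apply H|].
    apply Rplus_le_compat_l.
    pose proof (INR_2N1_pos n). pose proof (INR_2N1_ge n).
    pose proof (le_INR _ _ Hn).
    apply (Rmult_le_reg_r (INR (2 * n + 1))); auto.
    unfold Rdiv. rewrite Rmult_assoc, Rinv_l by lra. rewrite Rmult_1_r.
    assert (C <= d * INR n).
    { assert (HC' : C / d * d <= INR n * d) by (apply Rmult_le_compat_r; lra).
      replace (C / d * d) with C in HC' by (field; lra). lra. }
    nra.
  - rewrite LimSup_seq_const. apply Rbar_le_refl.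
Qed.

Lemma dens_ge A c C : 0 <= C ->
  (forall N, c - C / INR (2 * N + 1) <= INR (count_window A N) / INR (2 * N + 1)) ->
  forall d, 0 < d -> Rbar_le (Finite (c - d)) (density A).
Proof.
  intros HC H d Hd. unfold density.
  eapply Rbar_le_trans.
  2: apply (LimSup_le (fun _ => c - d)).
  - rewrite LimSup_seq_const. apply Rbar_le_refl.
  - destruct (exN (C / d)) as [N0 HN0]. exists N0. intros n Hn.
    eapply Rle_trans; [|apply H].
    apply Rplus_le_compat_l. apply Ropp_le_contravar.
    pose proof (INR_2N1_pos n). pose proof (INR_2N1_ge n).
    pose proof (le_INR _ _ Hn).
    apply (Rmult_le_reg_r (INR (2 * n + 1))); auto.
    unfold Rdiv. rewrite Rmult_assoc, Rinv_l by lra. rewrite Rmult_1_r.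
    assert (C <= d * INR n).
    { assert (HC' : C / d * d <= INR n * d) by (apply Rmult_le_compat_r; lra).
      replace (C / d * d) with C in HC' by (field; lra). lra. }
    nra.
Qed.

Lemma real_up W D n I X : 0 < D -> 0 < n -> n * W <= I * (D + X) -> W / D <= I / n + (I * X / n) / D.
Proof.
  intros HD Hn H.
  replace (W / D) with ((n * W) * / (n * D)) by (field; lra).
  replace (I / n + (I * X / n) / D) with ((I * (D + X)) * / (n * D)) by (field; lra).
  apply Rmult_le_compat_r; auto.
  apply Rlt_le, Rinv_0_lt_compat, Rmult_lt_0_compat; auto.
Qed.

Lemma real_low W D K c : 0 < D -> 0 < K -> c * D <= K * W + K * c -> c / K - c / D <= W / D.
Proof.
  intros HD HK H.
  replace (c / K - c / D) with ((c * D - K * c) * / (K * D)) by (field; lra).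
  replace (W / D) with ((K * W) * / (K * D)) by (field; lra).
  apply Rmult_le_compat_r.
  - apply Rlt_le, Rinv_0_lt_compat, Rmult_lt_0_compat; auto.
  - lra.
Qed.

Lemma real_final I n K ck B eps : 1 <= n -> 0 < K -> 0 < eps -> 0 <= B ->
  I * K <= n * ck + B -> 4 * B / eps < K -> I / n - eps / 2 <= ck / K.
Proof.
  intros Hn HK He HB H1 H2.
  assert (h1 : I / n - ck / K = (I * K - n * ck) * / (n * K)) by (field; lra).
  assert (h2 : (I * K - n * ck) * / (n * K) <= B * / (n * K)).
  { apply Rmult_le_compat_r; [apply Rlt_le, Rinv_0_lt_compat, Rmult_lt_0_compat; lra | lra]. }
  assert (h3 : B * / (n * K) <= B / K).
  { replace (B * / (n * K)) with ((B / K) * / n) by (field; lra).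
    assert (0 <= B / K) by (unfold Rdiv; apply Rmult_le_pos; [lra| apply Rlt_le, Rinv_0_lt_compat; lra]).
    assert (/ n <= 1).
    { rewrite <- Rinv_1. apply Rinv_le_contravar; lra. }
    assert (0 < / n) by (apply Rinv_0_lt_compat; lra).
    nra. }
  assert (h4 : B / K < eps / 4).
  { assert (4 * B < K * eps).
    { replace (4 * B) with ((4 * B / eps) * eps) by (field; lra).
      apply Rmult_lt_compat_r; lra. }
    apply (Rmult_lt_reg_r K); auto.
    replace (B / K * K) with B by (field; lra). lra. }
  lra.
Qed.

Lemma ratio_upper k i A : independent (SS k i) A -> forall N,
  INR (count_window A N) / INR (2 * N + 1) <=
  INR (i+1) / INR (2*i+3) + (INR (i+1) * INR (2*i+1+k) / INR (2*i+3)) / INR (2 * N + 1).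
Proof.
  intros H N. apply real_up.
  - apply INR_2N1_pos.
  - apply lt_0_INR; lia.
  - rewrite cnt_window. pose proof (upper_count k i A H N) as U.
    apply le_INR in U. rewrite !mult_INR in U.
    replace (INR (2 * N + 1) + INR (2 * i + 1 + k)) with (INR (2 * N + 1 + (2 * i + 1) + k)).
    + exact U.
    + rewrite !plus_INR. ring.
Qed.

Lemma ratio_lower k i : (2*i+2 <= k)%nat -> forall N,
  INR (ck k i) / INR k - INR (ck k i) / INR (2 * N + 1) <= INR (count_window (Acon k i) N) / INR (2 * N + 1).
Proof.
  intros Hk N. apply real_low.
  - apply INR_2N1_pos.
  - apply lt_0_INR; lia.
  - rewrite cnt_window.
    set (W := cnt (Acon k i) (- Z.of_nat N)%Z (2 * N + 1)).
    set (q := ((2 * N + 1) / k)%nat).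
    assert (H1 : (q * ck k i <= cnt (Acon k i) (- Z.of_nat N)%Z (q * k))%nat)
      by (apply cnt_rep; intros; apply block_lower; auto).
    assert (H2 : (cnt (Acon k i) (- Z.of_nat N)%Z (q * k) <= W)%nat).
    { apply cnt_mono; [lia|].
      pose proof (Nat.div_mod (2*N+1) k ltac:(lia)). fold q in H. nia. }
    assert (H3 : (ck k i * (2 * N + 1) <= k * W + k * ck k i)%nat).
    { pose proof (Nat.div_mod (2*N+1) k ltac:(lia)). pose proof (Nat.mod_upper_bound (2*N+1) k ltac:(lia)).
      fold q in H, H0. nia. }
    apply le_INR in H3. rewrite !plus_INR, !mult_INR in H3. exact H3.
Qed.

Lemma ck_bound k i : ((i+1) * k <= (2*i+3) * ck k i + (i+1) * ((2*i+1) + 2*(2*i+3)))%nat.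
Proof.
  unfold ck.
  pose proof (Nat.div_mod (k - (2*i+1)) (2*i+3) ltac:(lia)) as H.
  pose proof (Nat.mod_upper_bound (k - (2*i+1)) (2*i+3) ltac:(lia)) as H0.
  set (w := ((k - (2 * i + 1)) / (2 * i + 3))%nat) in *.
  set (r := ((k - (2 * i + 1)) mod (2 * i + 3))%nat) in *.
  destruct w as [|w'].
  - simpl. nia.
  - replace (S w' - 1)%nat with w' by lia. nia.
Qed.

Theorem theorem25 (i : nat) :
  forall eps : R, 0 < eps ->
  exists K : nat, forall k : nat, (K <= k)%nat ->
    Rbar_lt (Finite (INR (i + 1) / INR (2 * i + 3) - eps))
            (indep_ratio (Z.of_nat k :: Z.of_nat (k + 2 * i + 1) :: 1%Z :: nil)) /\
    Rbar_lt (indep_ratio (Z.of_nat k :: Z.of_nat (k + 2 * i + 1) :: 1%Z :: nil))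
            (Finite (INR (i + 1) / INR (2 * i + 3) + eps)).
Proof.
  intros eps He.
  set (B := INR ((i+1) * ((2*i+1) + 2*(2*i+3)))).
  destruct (exN (4 * B / eps)) as [K0 HK0].
  exists (Nat.max K0 (2*i+2)). intros k Hk.
  change (Z.of_nat k :: Z.of_nat (k + 2 * i + 1) :: 1%Z :: nil) with (SS k i).
  set (T := INR (i + 1) / INR (2 * i + 3)).
  set (E := fun r : R => exists A : Z -> bool, independent (SS k i) A /\ density A = Finite r).
  unfold indep_ratio. fold E.
  destruct (Lub_Rbar_correct E) as [Hub Hleast].
  assert (Hpos : 0 <= INR (i + 1) * INR (2 * i + 1 + k) / INR (2 * i + 3)).
  { unfold Rdiv. apply Rmult_le_pos; [apply Rmult_le_pos; apply pos_INR|].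
    apply Rlt_le, Rinv_0_lt_compat, lt_0_INR; lia. }
  assert (Hup : forall A d, independent (SS k i) A -> 0 < d -> Rbar_le (density A) (Finite (T + d))).
  { intros A d HA Hd. apply (dens_le A T _ Hpos); auto.
    intros N. apply ratio_upper; auto. }
  split.
  - assert (Hk2 : (2*i+2 <= k)%nat) by lia.
    assert (Hlo : Rbar_le (Finite (INR (ck k i) / INR k - eps / 4)) (density (Acon k i))).
    { apply (dens_ge _ _ (INR (ck k i))); [apply pos_INR| |lra].
      intros N. apply ratio_lower; auto. }
    pose proof (Hup (Acon k i) 1 (Acon_indep k i Hk2) Rlt_0_1) as Hhi.
    destruct (density (Acon k i)) as [r| |] eqn:Hd; simpl in Hlo, Hhi; try contradiction.
    assert (HE : E r) by (exists (Acon k i); split; auto; apply Acon_indep; auto).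
    apply (Rbar_lt_le_trans _ (Finite r)); [|apply Hub; auto].
    simpl.
    assert (Hf : T - eps / 2 <= INR (ck k i) / INR k).
    { apply (real_final _ _ _ _ B eps).
      - apply (le_INR 1). lia.
      - apply lt_0_INR; lia.
      - auto.
      - apply pos_INR.
      - pose proof (ck_bound k i) as Hc. apply le_INR in Hc.
        rewrite plus_INR, !mult_INR in Hc. unfold B. rewrite mult_INR. lra.
      - eapply Rlt_le_trans; [exact HK0|]. apply le_INR. lia. }
    lra.
  - apply (Rbar_le_lt_trans _ (Finite (T + eps / 2))).
    + apply Hleast. intros r [A [HA Hd]]. rewrite <- Hd. apply Hup; auto; lra.
    + simpl. lra.
Qed.
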